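(* Let $(X,D)$ be a JS-metric space with a partial order $\le$, and let $F:X^2\to X$ have the mixed monotone property and satisfy, for some $k\in[0,1)$, $D(F(x,y),F(u,v))\le \frac{k}{2}(D(x,u)+D(y,v))$ for all $x\ge u$, $y\le v$. Suppose $(x,y)$ and $(x^*,y^* )$ are coupled fixed points of $F$ that are incomparable in $X^2$, and there exists $(z_1,z_2)\in X^2$ which is an upper bound or a lower bound (in $X^2$) of both $(x,y)$ and $(x^*,y^* )$, with $D(x,z_1),D(y,z_2),D(x^*,z_1),D(y^*,z_2)<\infty$. Then $x=x^*$ and $y=y^*$.
   Context: Arithmetic is carried out in the extended reals. $(X,D)$ is a JS-metric space: $D:X\times X\to[0,\infty]$ satisfies (D1) $D(x,y)=0\Rightarrow x=y$; (D2) $D(x,y)=D(y,x)$; (D3) there exists $c>0$ such that for all $x,y\in X$ and every sequence $(x_n)$ with $\lim_n D(x_n,x)=0$, $D(x,y)\le c\limsup_n D(x_n,y)$. $F$ has the mixed monotone property if $x_1\le x_2\Rightarrow F(x_1,y)\le F(x_2,y)$ and $y_1\le y_2\Rightarrow F(x,y_1)\ge F(x,y_2)$. A coupled fixed point is $(x,y)$ with $x=F(x,y)$, $y=F(y,x)$. The partial order on $X^2$ is $(u,v)\le(x,y)\iff u\le x$ and $v\ge y$; two elements are comparable if one is $\le$ the other. *)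

(* Defs.v *)
From Stdlib Require Import Reals.
Open Scope R_scope.

(* Extended nonnegative reals [0, +oo] represented as R + {+oo}. *)
Inductive ER : Type := Fin (r : R) | PInf.

Definition ER_le (a b : ER) : Prop :=
  match a, b with
  | Fin x, Fin y => x <= y
  | _, PInf => True
  | PInf, Fin _ => False
  end.

Definition ER_add (a b : ER) : ER :=
  match a, b with
  | Fin x, Fin y => Fin (x + y)
  | _, _ => PInf
  end.

(* scalar multiplication by a nonnegative real; convention 0 * oo = 0 *)
Definition ER_scal (r : R) (a : ER) : ER :=
  match a with
  | Fin x => Fin (r * x)
  | PInf => if Req_EM_T r 0 then Fin 0 else PInf
  end.

Definition ER_is_sup (S : ER -> Prop) (l : ER) : Prop :=
  (forall z, S z -> ER_le z l) /\ (forall b, (forall z, S z -> ER_le z b) -> ER_le l b).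

Definition ER_is_inf (S : ER -> Prop) (l : ER) : Prop :=
  (forall z, S z -> ER_le l z) /\ (forall b, (forall z, S z -> ER_le b z) -> ER_le b l).

Definition ER_is_limsup (u : nat -> ER) (l : ER) : Prop :=
  exists s : nat -> ER,
    (forall n, ER_is_sup (fun z => exists m, (n <= m)%nat /\ z = u m) (s n)) /\
    ER_is_inf (fun z => exists n, z = s n) l.

Definition ER_lim0 (u : nat -> ER) : Prop :=
  forall eps, 0 < eps -> exists N, forall n, (N <= n)%nat -> ER_le (u n) (Fin eps).

Definition is_JS_metric {X : Type} (D : X -> X -> ER) : Prop :=
  (forall x y, ER_le (Fin 0) (D x y)) /\
  (forall x y, D x y = Fin 0 -> x = y) /\
  (forall x y, D x y = D y x) /\
  (exists c, 0 < c /\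
     forall (x y : X) (xn : nat -> X),
       ER_lim0 (fun n => D (xn n) x) ->
       forall l, ER_is_limsup (fun n => D (xn n) y) l ->
         ER_le (D x y) (ER_scal c l)).

Definition is_partial_order {X : Type} (le : X -> X -> Prop) : Prop :=
  (forall x, le x x) /\
  (forall x y, le x y -> le y x -> x = y) /\
  (forall x y z, le x y -> le y z -> le x z).

Definition mixed_monotone {X : Type} (le : X -> X -> Prop) (F : X -> X -> X) : Prop :=
  (forall x1 x2 y, le x1 x2 -> le (F x1 y) (F x2 y)) /\
  (forall x y1 y2, le y1 y2 -> le (F x y2) (F x y1)).

Definition coupled_fixed_point {X : Type} (F : X -> X -> X) (x y : X) : Prop :=
  x = F x y /\ y = F y x.

Definition le2 {X : Type} (le : X -> X -> Prop) (p q : X * X) : Prop :=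
  le (fst p) (fst q) /\ le (snd q) (snd p).

Definition comparable2 {X : Type} (le : X -> X -> Prop) (p q : X * X) : Prop :=
  le2 le p q \/ le2 le q p.

(* Main.v *)
Require Import Defs.
From Stdlib Require Import Reals Lra Lia.
Open Scope R_scope.

Lemma powk_bounds (k : R) n : 0 <= k < 1 -> 0 <= k ^ n <= 1.
Proof.
  intros hk. induction n as [|n IH]; simpl; [lra|]. split; nra.
Qed.

Lemma small_pow (k M : R) : 0 <= k < 1 -> 0 <= M ->
  forall eps, 0 < eps -> exists N, forall n, (N <= n)%nat -> k ^ n * M <= eps.
Proof.
  intros hk hM eps he.
  assert (Rabs k < 1) by (rewrite Rabs_pos_eq; lra).
  assert (hy : 0 < eps / (M + 1)) by (apply Rdiv_lt_0_compat; lra).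
  destruct (pow_lt_1_zero k H _ hy) as [N HN].
  exists N. intros n hn. specialize (HN n hn).
  pose proof (powk_bounds k n hk).
  rewrite Rabs_pos_eq in HN by lra.
  assert (k ^ n * (M + 1) < eps).
  { apply Rmult_lt_compat_r with (r := M + 1) in HN; [|lra].
    unfold Rdiv in HN. rewrite Rmult_assoc, Rinv_l in HN by lra. lra. }
  nra.
Qed.

Lemma limsup0 (k M : R) (u : nat -> ER) : 0 <= k < 1 -> 0 <= M ->
  (forall m, exists p, u m = Fin p /\ 0 <= p <= k ^ m * M) ->
  ER_is_limsup u (Fin 0).
Proof.
  intros hk hM hu.
  set (v := fun m => match u m with Fin r => r | PInf => 0 end).
  assert (huv : forall m, u m = Fin (v m) /\ 0 <= v m <= k ^ m * M).
  { intro m. destruct (hu m) as [p [e h]]. unfold v. rewrite e. auto. }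
  set (E := fun n z => exists m, (n <= m)%nat /\ z = v m).
  assert (bnd : forall n, bound (E n)).
  { intro n. exists M. intros z [m [_ ->]]. destruct (huv m) as [_ h].
    pose proof (powk_bounds k m hk). nra. }
  assert (ne : forall n, exists z, E n z).
  { intro n. exists (v n). exists n. split; auto. }
  exists (fun n => Fin (proj1_sig (completeness (E n) (bnd n) (ne n)))).
  split.
  - intro n. destruct (completeness (E n) (bnd n) (ne n)) as [s [hs1 hs2]]. simpl.
    split.
    + intros z [m [hm ->]]. rewrite (proj1 (huv m)). simpl. apply hs1. exists m; auto.
    + intros b hb. destruct b as [r|]; simpl; auto. apply hs2.
      intros z [m [hm ->]]. specialize (hb (u m) (ex_intro _ m (conj hm eq_refl))).
      rewrite (proj1 (huv m)) in hb. exact hb.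
  - split.
    + intros z [n ->]. destruct (completeness (E n) (bnd n) (ne n)) as [s [hs1 hs2]].
      simpl. assert (v n <= s) by (apply hs1; exists n; auto).
      destruct (huv n). lra.
    + intros b hb. destruct b as [r|].
      2:{ specialize (hb _ (ex_intro _ 0%nat eq_refl)). simpl in hb. exact hb. }
      simpl. destruct (Rle_dec r 0) as [|hr]; auto. exfalso.
      assert (hr2 : 0 < r / 2) by lra.
      destruct (small_pow k M hk hM _ hr2) as [N HN].
      specialize (hb _ (ex_intro _ N eq_refl)). simpl in hb.
      destruct (completeness (E N) (bnd N) (ne N)) as [s [hs1 hs2]]. simpl in hb.
      assert (s <= r / 2).
      { apply hs2. intros z [m [hm ->]]. destruct (huv m). specialize (HN m hm). lra. }
      lra.
Qed.

Lemma lim0_of (k M : R) (u : nat -> ER) : 0 <= k < 1 -> 0 <= M ->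
  (forall m, exists p, u m = Fin p /\ 0 <= p <= k ^ m * M) -> ER_lim0 u.
Proof.
  intros hk hM hu eps he. destruct (small_pow k M hk hM eps he) as [N HN].
  exists N. intros n hn. destruct (hu n) as [p [-> h]]. simpl. specialize (HN n hn). lra.
Qed.

Lemma uniq_lim {X : Type} (D : X -> X -> ER) (k M : R) (a : nat -> X) (x xs : X) :
  is_JS_metric D -> 0 <= k < 1 -> 0 <= M ->
  (forall m, exists p, D (a m) x = Fin p /\ 0 <= p <= k ^ m * M) ->
  (forall m, exists p, D (a m) xs = Fin p /\ 0 <= p <= k ^ m * M) -> x = xs.
Proof.
  intros [hnn [hD1 [hsym [c [hc hD3]]]]] hk hM h1 h2.
  pose proof (hD3 x xs a (lim0_of k M _ hk hM h1) (Fin 0) (limsup0 k M _ hk hM h2)) as H.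
  simpl in H. apply hD1. specialize (hnn x xs). destruct (D x xs); simpl in *.
  - f_equal. lra.
  - contradiction.
Qed.

Lemma bound_iter (k : R) (A B : nat -> ER) p0 q0 : 0 <= k ->
  A 0%nat = Fin p0 -> B 0%nat = Fin q0 ->
  (forall n, ER_le (Fin 0) (A n)) -> (forall n, ER_le (Fin 0) (B n)) ->
  (forall n, ER_le (A (S n)) (ER_scal (k/2) (ER_add (A n) (B n)))) ->
  (forall n, ER_le (B (S n)) (ER_scal (k/2) (ER_add (A n) (B n)))) ->
  forall n, exists p q, A n = Fin p /\ B n = Fin q /\ 0 <= p /\ 0 <= q /\
     p + q <= k ^ n * (p0 + q0).
Proof.
  intros hk hA0 hB0 hA hB sA sB n. induction n as [|n IH].
  - exists p0, q0. pose proof (hA 0%nat). pose proof (hB 0%nat).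
    rewrite hA0 in *. rewrite hB0 in *. simpl in *. repeat split; auto; lra.
  - destruct IH as [p [q [ea [eb [hp [hq hpq]]]]]].
    specialize (sA n). specialize (sB n). rewrite ea, eb in sA, sB. simpl in sA, sB.
    pose proof (hA (S n)). pose proof (hB (S n)).
    destruct (A (S n)) as [p'|]; [|contradiction].
    destruct (B (S n)) as [q'|]; [|contradiction].
    simpl in *. exists p', q'. repeat split; auto.
    assert (k * (p + q) <= k * (k ^ n * (p0 + q0))) by (apply Rmult_le_compat_l; lra).
    lra.
Qed.

Lemma ER_add_comm a b : ER_add a b = ER_add b a.
Proof. destruct a, b; simpl; auto. f_equal; ring. Qed.

Theorem mainTheorem7 (X : Type) (D : X -> X -> ER) (le : X -> X -> Prop)
  (F : X -> X -> X) (k : R)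
  (hD : is_JS_metric D) (hle : is_partial_order le)
  (hmono : mixed_monotone le F)
  (hk : 0 <= k < 1)
  (hcontr : forall x y u v, le u x -> le y v ->
      ER_le (D (F x y) (F u v)) (ER_scal (k / 2) (ER_add (D x u) (D y v))))
  (x y xs ys : X)
  (hfix1 : coupled_fixed_point F x y) (hfix2 : coupled_fixed_point F xs ys)
  (hincomp : ~ comparable2 le (x, y) (xs, ys))
  (z1 z2 : X)
  (hbound : (le2 le (x, y) (z1, z2) /\ le2 le (xs, ys) (z1, z2)) \/
            (le2 le (z1, z2) (x, y) /\ le2 le (z1, z2) (xs, ys)))
  (hfin : D x z1 <> PInf /\ D y z2 <> PInf /\ D xs z1 <> PInf /\ D ys z2 <> PInf) :
  x = xs /\ y = ys.
Proof.
  set (it := fun n => Nat.iter n (fun p => (F (fst p) (snd p), F (snd p) (fst p))) (z1, z2)).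
  set (a := fun n => fst (it n)). set (b := fun n => snd (it n)).
  assert (ha : forall n, a (S n) = F (a n) (b n)) by reflexivity.
  assert (hb : forall n, b (S n) = F (b n) (a n)) by reflexivity.
  assert (a0 : a 0%nat = z1) by reflexivity.
  assert (b0 : b 0%nat = z2) by reflexivity.
  clearbody a b. clear it.
  destruct hle as [hrefl [hanti htrans]]. destruct hmono as [hm1 hm2].
  pose proof hD as [hnn [_ [hsym _]]].
  assert (conv : forall u v, coupled_fixed_point F u v ->
            D u z1 <> PInf -> D v z2 <> PInf ->
            (le u z1 /\ le z2 v) \/ (le z1 u /\ le v z2) ->
            exists M, 0 <= M /\
              (forall m, exists p, D (a m) u = Fin p /\ 0 <= p <= k ^ m * M) /\
              (forall m, exists p, D (b m) v = Fin p /\ 0 <= p <= k ^ m * M)).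
  { intros u v [fu fv] hu hv hcase.
    assert (step : forall n, ER_le (D (a (S n)) u) (ER_scal (k/2) (ER_add (D (a n) u) (D (b n) v)))
                          /\ ER_le (D (b (S n)) v) (ER_scal (k/2) (ER_add (D (a n) u) (D (b n) v)))).
    { destruct hcase as [[h1 h2]|[h1 h2]].
      - assert (inv : forall n, le u (a n) /\ le (b n) v).
        { induction n as [|n [i1 i2]]; [rewrite a0, b0; auto|].
          rewrite ha, hb. split.
          + rewrite fu at 1. apply htrans with (F (a n) v); [apply hm1; auto | apply hm2; auto].
          + rewrite fv at 1. apply htrans with (F v (a n)); [apply hm1; auto | apply hm2; auto]. }
        intro n. destruct (inv n) as [i1 i2]. rewrite ha, hb. split.
        + rewrite fu at 1. apply hcontr; auto.
        + rewrite fv at 1. rewrite hsym. rewrite (hsym (a n)), (hsym (b n)), ER_add_comm.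
          apply hcontr; auto.
      - assert (inv : forall n, le (a n) u /\ le v (b n)).
        { induction n as [|n [i1 i2]]; [rewrite a0, b0; auto|].
          rewrite ha, hb. split.
          + rewrite fu at 1. apply htrans with (F u (b n)); [apply hm1; auto | apply hm2; auto].
          + rewrite fv at 1. apply htrans with (F (b n) u); [apply hm1; auto | apply hm2; auto]. }
        intro n. destruct (inv n) as [i1 i2]. rewrite ha, hb. split.
        + rewrite fu at 1. rewrite hsym. rewrite (hsym (a n)), (hsym (b n)).
          apply hcontr; auto.
        + rewrite fv at 1. rewrite ER_add_comm. apply hcontr; auto. }
    assert (e1 : exists p0, D (a 0%nat) u = Fin p0).
    { rewrite a0, hsym. destruct (D u z1); [eauto|contradiction]. }
    assert (e2 : exists q0, D (b 0%nat) v = Fin q0).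
    { rewrite b0, hsym. destruct (D v z2); [eauto|contradiction]. }
    destruct e1 as [p0 e1], e2 as [q0 e2].
    pose proof (bound_iter k (fun n => D (a n) u) (fun n => D (b n) v) p0 q0 (proj1 hk) e1 e2
      (fun n => hnn _ _) (fun n => hnn _ _) (fun n => proj1 (step n)) (fun n => proj2 (step n))) as BI.
    pose proof (hnn (a 0%nat) u) as n1. pose proof (hnn (b 0%nat) v) as n2.
    rewrite e1 in n1. rewrite e2 in n2. simpl in n1, n2.
    exists (p0 + q0). split; [lra|]. split.
    - intro m. destruct (BI m) as [p [q [E1 [E2 [P1 [P2 P3]]]]]]. exists p. repeat split; auto; lra.
    - intro m. destruct (BI m) as [p [q [E1 [E2 [P1 [P2 P3]]]]]]. exists q. repeat split; auto; lra. }
  destruct hfin as [f1 [f2 [f3 f4]]].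
  rewrite hsym in f1, f2, f3, f4.
  assert (c1 : (le x z1 /\ le z2 y) \/ (le z1 x /\ le y z2)).
  { destruct hbound as [[[A1 A2] _]|[[A1 A2] _]]; simpl in *; auto. }
  assert (c2 : (le xs z1 /\ le z2 ys) \/ (le z1 xs /\ le ys z2)).
  { destruct hbound as [[_ [A1 A2]]|[_ [A1 A2]]]; simpl in *; auto. }
  destruct (conv x y hfix1 (fun e => f1 (eq_trans (hsym _ _) e)) (fun e => f2 (eq_trans (hsym _ _) e)) c1)
    as [M1 [hM1 [A1 B1]]].
  destruct (conv xs ys hfix2 (fun e => f3 (eq_trans (hsym _ _) e)) (fun e => f4 (eq_trans (hsym _ _) e)) c2)
    as [M2 [hM2 [A2 B2]]].
  set (M := M1 + M2).
  assert (w : forall (u : nat -> ER) Mi, 0 <= Mi -> Mi <= M ->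
     (forall m, exists p, u m = Fin p /\ 0 <= p <= k ^ m * Mi) ->
     (forall m, exists p, u m = Fin p /\ 0 <= p <= k ^ m * M)).
  { intros u Mi h0 h1 hu m. destruct (hu m) as [p [e h]]. exists p. split; auto.
    pose proof (powk_bounds k m hk). nra. }
  assert (hM : 0 <= M) by (unfold M; lra).
  assert (l1 : M1 <= M) by (unfold M; lra).
  assert (l2 : M2 <= M) by (unfold M; lra).
  split.
  - apply (uniq_lim D k M a x xs hD hk hM); [apply (w _ M1) | apply (w _ M2)]; auto.
  - apply (uniq_lim D k M b y ys hD hk hM); [apply (w _ M1) | apply (w _ M2)]; auto.
Qed.
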